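(* Let $G=(V,E)$ be a finite, simple, connected graph with Bakry Emery curvature $K(x)\geq K>0$ at every vertex $x$. Then \[ \operatorname{diam}_{\operatorname{eff}}(G)\leq\frac{\max_v\operatorname{Deg}(v)}{K}. \]
   Context: $d$ is the combinatorial distance, $\operatorname{Deg}$ the degree, $\operatorname{diam}_{\operatorname{eff}}(G)=\frac{1}{|V|^2}\sum_{x,y}d(x,y)$. Laplacian $\Delta f(x)=\sum_{y\sim x}(f(y)-f(x))$. Define $\Gamma_0(f,g)=fg$ and $2\Gamma_{i+1}(f,g)=\Delta\Gamma_i(f,g)-\Gamma_i(f,\Delta g)-\Gamma_i(\Delta f,g)$; write $\Gamma=\Gamma_1$, $\Gamma_i f=\Gamma_i(f,f)$. The Bakry Emery curvature at $x$ is $K(x)=\inf\{\Gamma_2 f(x): f:V\to\mathbb{R},\ \Gamma f(x)=1\}$. *)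

(* Defs.v *)
From HB Require Import structures.
From mathcomp Require Import all_boot all_order all_algebra.
From mathcomp Require Import boolp classical_sets reals constructive_ereal ereal.
Set Implicit Arguments. Unset Strict Implicit. Unset Printing Implicit Defensive.
Import Order.TTheory GRing.Theory Num.Theory.
Local Open Scope ring_scope.

Section Graph.
Variables (T : finType) (e : rel T).

Definition simple_graph := symmetric e /\ irreflexive e.
Definition connected_graph := forall x y : T, connect e x y.

Definition Deg (v : T) : nat := #|[set y | e v y]|.
Definition maxDeg : nat := \max_(v : T) Deg v.

Definition walk_len (x y : T) (n : nat) : bool :=
  [exists p : n.-tuple T, path e x p && (last x p == y)].

(* combinatorial distance: least length of a walk from x to y
   (in a connected graph this is < #|T|, so the search range suffices) *)
Definition dist (x y : T) : nat := find (walk_len x y) (iota 0 #|T|).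

Variable R : realType.

Definition diam_eff : R :=
  (#|T|%:R ^+ 2)^-1 * \sum_(x : T) \sum_(y : T) (dist x y)%:R.

Definition lap (f : T -> R) : T -> R := fun x => \sum_(y | e x y) (f y - f x).

Fixpoint Gam (i : nat) (f g : T -> R) : T -> R :=
  match i with
  | 0 => fun x => f x * g x
  | i'.+1 => fun x =>
      (lap (Gam i' f g) x - Gam i' f (lap g) x - Gam i' (lap f) g x) / 2
  end.

Definition Gamma (f : T -> R) : T -> R := Gam 1 f f.
Definition Gamma2 (f : T -> R) : T -> R := Gam 2 f f.

(* Bakry-Emery curvature at x, as an extended real:
   inf { Gamma2 f (x) : Gamma f (x) = 1 }  (= +oo if the set is empty) *)
Definition BEcurv (x : T) : \bar R :=
  ereal_inf [set (Gamma2 f x)%:E | f in [set f : T -> R | Gamma f x = 1]].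

End Graph.

(* Main.v *)
Require Import Defs.
From HB Require Import structures.
From mathcomp Require Import all_boot all_order all_algebra.
From mathcomp Require Import boolp classical_sets reals constructive_ereal ereal.
From mathcomp Require Import ring lra.
Import Order.TTheory GRing.Theory Num.Theory.
Local Open Scope ring_scope.

Section S.
Variables (R : realType) (T : finType) (e : rel T).

Lemma Gam1E (a b : T -> R) x :
  Gam e 1 a b x = (\sum_(y | e x y) (a y - a x) * (b y - b x)) / 2.
Proof.
rewrite /= /lap; congr (_ / 2).
rewrite mulr_sumr mulr_suml -!sumrB; apply: eq_bigr => y _; ring.
Qed.

Lemma Gam2E (a b : T -> R) x :
  Gam e 2 a b x = (lap e (Gam e 1 a b) x - Gam e 1 a (lap e b) x - Gam e 1 (lap e a) b x) / 2.
Proof. by []. Qed.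

Lemma lapZ (k : R) (a : T -> R) x : lap e (fun z => k * a z) x = k * lap e a x.
Proof. rewrite /lap mulr_sumr; apply: eq_bigr => y _; ring. Qed.

Lemma Gam1Z (k l : R) (a b : T -> R) x :
  Gam e 1 (fun z => k * a z) (fun z => l * b z) x = k * l * Gam e 1 a b x.
Proof.
rewrite !Gam1E mulrA; congr (_ / 2); rewrite mulr_sumr; apply: eq_bigr => y _; ring.
Qed.

Lemma Gam2Z (k : R) (a : T -> R) x :
  Gamma2 e (fun z => k * a z) x = k ^+ 2 * Gamma2 e a x.
Proof.
rewrite /Gamma2 !Gam2E.
have -> : Gam e 1 (fun z => k * a z) (fun z => k * a z) = fun z => k * k * Gam e 1 a a z.
  by apply: funext => z; rewrite Gam1Z.
have -> : lap e (fun z => k * a z) = fun z => k * lap e a z.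
  by apply: funext => z; rewrite lapZ.
rewrite lapZ !Gam1Z; ring.
Qed.

Lemma curv (K : R) : (forall x, K%:E <= BEcurv e R x)%E ->
  forall a x, 0 < Gamma e a x -> K * Gamma e a x <= Gamma2 e a x.
Proof.
move=> hK a x hc.
set c := Gamma e a x in hc *.
pose s := Num.sqrt c. pose k := s^-1.
have s0 : 0 < s by rewrite sqrtr_gt0.
have kkc : k * k * c = 1.
  rewrite /k -(sqr_sqrtr (ltW hc)) -/s expr2; field; exact: lt0r_neq0.
have Gh : Gamma e (fun z => k * a z) x = 1 by rewrite /Gamma Gam1Z -/(Gamma e a x) kkc.
have := le_trans (hK x) (ereal_inf_lbound (ex_intro2 _ _ (fun z => k * a z) Gh erefl)).
rewrite lee_fin Gam2Z => HK.
have := ler_wpM2r (ltW hc) HK.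
have -> : k ^+ 2 * Gamma2 e a x * c = Gamma2 e a x by rewrite -[RHS]mulr1 -kkc; ring.
by [].
Qed.

Lemma sum_lap (a : T -> R) : symmetric e -> \sum_x lap e a x = 0.
Proof.
move=> es; rewrite /lap.
under eq_bigr do rewrite sumrB.
rewrite sumrB; apply/eqP; rewrite subr_eq0; apply/eqP.
rewrite (eq_bigr (fun x => \sum_y (if e x y then a y else 0))); last by move=> x _; rewrite big_mkcond.
rewrite exchange_big /=; apply: eq_bigr => x _; rewrite [RHS]big_mkcond; apply: eq_bigr => y _.
by rewrite es.
Qed.

Definition Mop (a : T -> R) (x : T) : R := - lap e a x + \sum_z a z.

Lemma Mop_sum (I : finType) (c : I -> R) (phi : I -> T -> R) x :
  Mop (fun z => \sum_i c i * phi i z) x = \sum_i c i * Mop (phi i) x.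
Proof.
rewrite /Mop /lap.
have L1 : \sum_(y | e x y) (\sum_i c i * phi i y - \sum_i c i * phi i x)
   = \sum_i c i * \sum_(y | e x y) (phi i y - phi i x).
  under eq_bigr do rewrite -sumrB.
  rewrite exchange_big /=; apply: eq_bigr => i _; rewrite mulr_sumr.
  by apply: eq_bigr => y _; ring.
have L2 : \sum_z \sum_i c i * phi i z = \sum_i c i * \sum_z phi i z.
  by rewrite exchange_big; apply: eq_bigr => i _; rewrite mulr_sumr.
rewrite L1 L2 -sumrN -big_split; apply: eq_bigr => i _ /=; ring.
Qed.

Lemma sum_Mop (a : T -> R) : symmetric e -> \sum_x Mop a x = #|T|%:R * \sum_z a z.
Proof.
move=> es; rewrite /Mop big_split /= sumrN sum_lap // oppr0 add0r sumr_const.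
by rewrite mulr_natl.
Qed.

Lemma Mop_inj (a : T -> R) : connected_graph e -> symmetric e ->
  (forall x, Mop a x = 0) -> forall x, a x = 0.
Proof.
move=> ec es h0 x.
have n0 : (0 < #|T|)%N by apply/card_gt0P; exists x.
have sa : \sum_z a z = 0.
  have := sum_Mop a es; rewrite (eq_bigr (fun _ => 0)) // big1 // => /esym /eqP.
  by rewrite mulf_eq0 pnatr_eq0 eqn0Ngt n0 /= => /eqP.
have la : forall z, lap e a z = 0.
  by move=> z; have := h0 z; rewrite /Mop sa addr0 => /eqP; rewrite oppr_eq0 => /eqP.
pose x0 := [arg max_(i > x) a i]%O.
have hm : forall z, a z <= a x0.
  by rewrite /x0; case: arg_maxP => // i _ Hi z; apply: Hi.
have step : forall u v, (forall z, a z <= a u) -> e u v -> a v = a u.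
  move=> u v hu euv.
  have : \sum_(y | e u y) (a u - a y) = 0.
    have := la u; rewrite /lap => hl.
    rewrite (eq_bigr (fun y => - (a y - a u))); last by move=> y _; rewrite opprB.
    by rewrite sumrN hl oppr0.
  move/psumr_eq0P => H; apply/eqP; rewrite eq_sym -subr_eq0; apply/eqP.
  by apply: H => // y _; rewrite subr_ge0.
have cst : forall y, a y = a x0.
  move=> y; have /connectP [p pp ->] := ec x0 y.
  elim: p x0 hm pp => [|z p IH] u hu //= /andP [euz pz].
  have ez := step u z hu euz.
  rewrite (IH z) // => w; rewrite ez; exact: hu.
move: sa; rewrite (eq_bigr (fun _ => a x0)) // sumr_const => /eqP.
rewrite -mulr_natl mulf_eq0 pnatr_eq0 eqn0Ngt n0 /= => /eqP ax0.
by rewrite cst.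
Qed.

Lemma poisson (H : T -> R) : connected_graph e -> symmetric e ->
  \sum_x H x = 0 -> exists g, forall x, lap e g x = - H x.
Proof.
move=> ec es sH.
pose A : 'M[R]_#|T| := \matrix_(i, j) Mop (fun z => (enum_rank z == i)%:R) (enum_val j).
have AE : forall u : 'rV_#|T|, u *m A = \row_j Mop (fun z => u 0 (enum_rank z)) (enum_val j).
  move=> u; apply/rowP => j; rewrite !mxE.
  under eq_bigr do rewrite mxE.
  rewrite -Mop_sum; congr (Mop _ _); apply: funext => z.
  rewrite (bigD1 (enum_rank z)) //= eqxx mulr1 big1 ?addr0 // => i /negbTE.
  by rewrite eq_sym => ->; rewrite mulr0.
have Au : A \in unitmx.
  rewrite -row_free_unit; apply/inj_row_free => u Hu.
  have : forall x, Mop (fun z => u 0 (enum_rank z)) x = 0.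
    move=> x; have := congr1 (fun M : 'rV_#|T| => M 0 (enum_rank x)) Hu.
    by rewrite AE !mxE enum_rankK.
  move/(@Mop_inj _ ec es) => h0.
  by apply/rowP => i; rewrite mxE; have := h0 (enum_val i); rewrite enum_valK.
pose h : 'rV_#|T| := \row_j H (enum_val j).
pose v := h *m invmx A.
pose g := fun z => v 0 (enum_rank z).
have hM : forall x, Mop g x = H x.
  move=> x; have := congr1 (fun M : 'rV_#|T| => M 0 (enum_rank x)) (mulmxKV Au h).
  by rewrite /= AE !mxE enum_rankK.
exists g => x.
have n0 : (0 < #|T|)%N by apply/card_gt0P; exists x.
have sg : \sum_z g z = 0.
  have := sum_Mop g es; rewrite (eq_bigr _ (fun x _ => hM x)) sH => /esym /eqP.
  by rewrite mulf_eq0 pnatr_eq0 eqn0Ngt n0 /= => /eqP.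
by rewrite -(hM x) /Mop sg addr0 opprK.
Qed.

Lemma sum_deg y : \sum_(z | e y z) (1:R) = (Deg e y)%:R.
Proof. by rewrite /Deg cardsE -sum1_card natr_sum. Qed.

Lemma walk_dist x y : (dist e x y < #|T|)%N -> walk_len e x y (dist e x y).
Proof.
move=> h.
have hs : has (walk_len e x y) (iota 0 #|T|) by rewrite has_find size_iota.
by have := nth_find 0%N hs; rewrite nth_iota.
Qed.

Lemma dist_le x y k : walk_len e x y k -> (dist e x y <= k)%N.
Proof.
move=> w; case: (ltnP k #|T|) => hk.
  case: (leqP (dist e x y) k) => // hlt.
  by have := before_find 0%N hlt; rewrite nth_iota // w.
by apply: leq_trans hk; rewrite /dist -{2}(size_iota 0 #|T|) find_size.
Qed.

Lemma dist_lip x z y : e x z -> (dist e x y <= (dist e z y).+1)%N.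
Proof.
move=> exz; case: (ltnP (dist e z y) #|T|) => h.
  apply: dist_le; have /existsP [p /andP [pp lp]] := @walk_dist z y h.
  by apply/existsP; exists [tuple of z :: p]; rewrite /= exz pp.
apply: leq_trans (leqnSn _); apply: leq_trans h.
by rewrite /dist -{2}(size_iota 0 #|T|) find_size.
Qed.

Lemma dist_self y : dist e y y = 0%N.
Proof.
have w : walk_len e y y 0.
  rewrite /walk_len; apply/existsP; exists ([tuple] : 0.-tuple T); by rewrite /= eqxx.
by move: (@dist_le y y 0 w); rewrite leqn0 => /eqP.
Qed.

Lemma amgm (K a b : R) : 0 < K -> a * b <= K / 2 * a ^+ 2 + (2 * K)^-1 * b ^+ 2.
Proof.
move=> hK.
have e1 : K / 2 * a ^+ 2 + (2 * K)^-1 * b ^+ 2 - a * b = (K * a - b) ^+ 2 / (2 * K).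
  by field; rewrite lt0r_neq0.
rewrite -subr_ge0 e1; apply: divr_ge0; first exact: sqr_ge0.
by rewrite mulr_ge0 // ltW.
Qed.

Lemma sum_amgm (P : pred T) (a b : T -> R) (K : R) : 0 < K ->
  \sum_(i | P i) a i * b i <=
  K / 2 * \sum_(i | P i) a i ^+ 2 + (2 * K)^-1 * \sum_(i | P i) b i ^+ 2.
Proof.
move=> hK; rewrite !mulr_sumr -big_split /=; apply: ler_sum => i _; exact: amgm.
Qed.

Lemma key (K D m : R) (f g : T -> R) : symmetric e -> 0 < K ->
  (forall a x, 0 < Gamma e a x -> K * Gamma e a x <= Gamma2 e a x) ->
  (forall x, Gamma e f x <= D / 2) -> (forall x, (Deg e x)%:R <= D) ->
  (forall x, lap e g x = m - f x) -> forall y, m - f y <= D / K.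
Proof.
move=> es hK hcurv hf hD hg y.
have hg' : lap e g = fun x => m - f x by apply: funext.
have G1E : forall (a : T -> R) x, Gamma e a x = (\sum_(z | e x z) (a z - a x) ^+ 2) / 2.
  by move=> a x; rewrite /Gamma Gam1E; under eq_bigr do rewrite -expr2.
have G0 : forall (a : T -> R) x, 0 <= Gamma e a x.
  by move=> a x; rewrite G1E divr_ge0 // sumr_ge0 // => z _; exact: sqr_ge0.
pose x0 := [arg max_(i > y) Gamma e g i]%O.
have hm : forall z, Gamma e g z <= Gamma e g x0.
  by rewrite /x0; case: arg_maxP => // i _ Hi z; apply: Hi.
have D0 : 0 <= D by apply: le_trans (hD y).
have B : Gamma e g x0 * K ^+ 2 <= D / 2.
  case: (ltP 0 (Gamma e g x0)) => hu; last first.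
    have -> : Gamma e g x0 = 0 by apply/eqP; rewrite eq_le hu G0.
    by rewrite mul0r divr_ge0.
  have c1 := hcurv g x0 hu.
  have lu : lap e (Gamma e g) x0 <= 0.
    by rewrite /lap sumr_le0 // => z _; rewrite subr_le0.
  have G2 : Gamma2 e g x0 = (lap e (Gamma e g) x0 +
        \sum_(z | e x0 z) (g z - g x0) * (f z - f x0)) / 2.
    rewrite /Gamma2 Gam2E hg' !Gam1E -/(Gamma e g); congr (_ / 2).
    rewrite -!addrA; congr (_ + _).
    rewrite -mulNr -mulrBl -sumrN -sumrB mulr_suml; apply: eq_bigr => z _.
    by field.
  have S := sum_amgm (e x0) (fun z => g z - g x0) (fun z => f z - f x0) K hK.
  have hfx := hf x0; rewrite G1E in hfx.
  have hu' := hu; rewrite G1E in hu'.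
  rewrite G1E in c1 *; rewrite G2 in c1.
  set U := \sum_(z | e x0 z) (g z - g x0) ^+ 2 in S hu' c1 *.
  set V := \sum_(z | e x0 z) (f z - f x0) ^+ 2 in S hfx.
  set W := \sum_(z | e x0 z) (g z - g x0) * (f z - f x0) in S c1.
  set L := lap e (Gamma e g) x0 in lu c1.
  have : K * (U / 2) <= K / 2 * U / 2 + (2 * K)^-1 * V / 2 by lra.
  move=> h1.
  have h2 : K * (U / 2) <= (2 * K)^-1 * V by lra.
  have h3 : K * (U / 2) * K <= V / 2.
    have e3 : (2 * K)^-1 * V * K = V / 2 by field; rewrite lt0r_neq0.
    by rewrite -e3 ler_wpM2r // ltW.
  rewrite expr2; nra.
have S := sum_amgm (e y) (fun z => g z - g y) (fun _ => 1) K hK.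
have E1 : \sum_(z | e y z) (g z - g y) * 1 = \sum_(z | e y z) (g z - g y).
  by apply: eq_bigr => z _; rewrite mulr1.
have E2 : \sum_(z | e y z) (1:R) ^+ 2 = (Deg e y)%:R.
  by rewrite -sum_deg; apply: eq_bigr => z _; rewrite expr1n.
rewrite E1 E2 in S.
have ly : lap e g y = \sum_(z | e y z) (g z - g y) by [].
rewrite -hg ly.
have hy := hm y; rewrite G1E in hy.
set U := \sum_(z | e y z) (g z - g y) ^+ 2 in S hy.
have hdy := hD y.
set W := \sum_(z | e y z) (g z - g y) in S *.
apply: le_trans S _.
have e2 : D / K = K / 2 * (D / K ^+ 2) + (2 * K)^-1 * D.
  by field; rewrite lt0r_neq0.
rewrite e2; apply: lerD.
  apply: ler_wpM2l; first by rewrite divr_ge0 // ltW.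
  rewrite ler_pdivlMr ?exprn_gt0 //; nra.
by apply: ler_wpM2l => //; rewrite invr_ge0 mulr_ge0 // ltW.
Qed.
End S.

Theorem theoremA1 (R : realType) (T : finType) (e : rel T) (K : R) :
  simple_graph e -> connected_graph e -> 0 < K ->
  (forall x : T, (K%:E <= BEcurv e R x)%E) ->
  diam_eff e R <= (maxDeg e)%:R / K.
Proof.
move=> [es eirr] ec hK hcurvE.
have hcurv := @curv R T e K hcurvE.
set D : R := (maxDeg e)%:R.
have hD : forall x, (Deg e x)%:R <= D by move=> x; rewrite ler_nat; exact: leq_bigmax.
have Hy : forall y, \sum_x ((dist e x y)%:R : R) <= #|T|%:R * (D / K).
  move=> y; pose f := fun x => (dist e x y)%:R : R.
  have n0 : (0 < #|T|)%N by apply/card_gt0P; exists y.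
  have nz : (#|T|%:R : R) != 0 by rewrite pnatr_eq0 eqn0Ngt n0.
  pose m := (\sum_x f x) / #|T|%:R.
  have sH : \sum_x (f x - m) = 0.
    by rewrite sumrB sumr_const -mulr_natr /m mulfVK // subrr.
  have [g hg] := @poisson R T e _ ec es sH.
  have hg' : forall x, lap e g x = m - f x by move=> x; rewrite hg opprB.
  have hf : forall x, Gamma e f x <= D / 2.
    move=> x; rewrite /Gamma Gam1E ler_pM2r ?invr_gt0 //.
    apply: le_trans (hD x); rewrite -sum_deg; apply: ler_sum => z exz.
    have h1 := @dist_lip T e x z y exz.
    have h2 := @dist_lip T e z x y (etrans (es z x) exz).
    move: h1 h2; rewrite -!(ler_nat R) -!natr1 /f => h1 h2; nra.
  have := @key R T e K D m f g es hK hcurv hf hD hg' y.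
  rewrite /f dist_self subr0 /m ler_pdivrMr ?ltr0n // mulrC; exact.
have S : \sum_x \sum_y ((dist e x y)%:R : R) <= (#|T|%:R ^+ 2) * (D / K).
  rewrite exchange_big /=; apply: le_trans (ler_sum _ (fun y _ => Hy y)) _.
  have -> : \sum_(i : T) (#|T|%:R * (D / K)) = #|T|%:R * (#|T|%:R * (D / K)).
    by rewrite sumr_const [RHS]mulr_natl.
  by rewrite mulrA expr2.
have S0 : 0 <= \sum_x \sum_y ((dist e x y)%:R : R) by apply: sumr_ge0 => x _; apply: sumr_ge0 => y _; exact: ler0n.
have DK : 0 <= D / K by rewrite divr_ge0 // ltW.
rewrite /diam_eff; case: (posnP #|T|) => n0.
  by rewrite n0 expr2 mulr0 invr0 mul0r.
rewrite ler_pdivrMl ?exprn_gt0 ?ltr0n //.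
Qed.
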